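(* Let $M=\langle S,A,P,R,s_\iota,\gamma\rangle$ be an MDP, $s^*_1,s^*_2\in S$, and let $\mathcal{M}$ be the bisimulation metric RMDP constructed from $M$ (see context). Then the optimal robust value function $\underline{V}^*_{\mathcal{M}}\colon S\times S\to\mathbb{R}$ of $\mathcal{M}$ is a pseudometric on $S$.
   Context: An MDP $M=\langle S,A,P,R,s_\iota,\gamma\rangle$ has finite states $S$, finite actions $A$, transition function $P\colon S\times A\to\mathcal{D}(S)$, rewards $R\colon S\times A\to\mathbb{R}$, initial state $s_\iota$, discount $\gamma\in(0,1)$. A pseudometric on $X$ is $d\colon X\times X\to[0,\infty)$ with $d(x,x)=0$, $d(x,x')=d(x',x)$ and $d(x,x'')\le d(x,x')+d(x',x'')$. For distributions $\mu,\nu$ on $S$, $\Lambda_{\mu,\nu}$ is the set of couplings: $\vec\lambda\in\mathbb{R}_{\ge0}^{S\times S}$ with $\sum_{t'}\vec\lambda(t,t')=\mu(t)$ and $\sum_t\vec\lambda(t,t')=\nu(t')$. The bisimulation metric RMDP is $\mathcal{M}=\langle S\times S,A,\mathcal{U},\mathcal{R},\langle s^*_1,s^*_2\rangle,\gamma\rangle$, an $(s,a)$-rectangular RMDP with state space $S\times S$, uncertainty set $\mathcal{U}=\prod_{((s,s'),a)}\mathcal{U}_{((s,s'),a)}$ where $\mathcal{U}_{((s,s'),a)}=\Lambda_{P(s,a),P(s',a)}$ (a coupling $\vec\lambda$ is used as the distribution over successor pairs $(t,t')$), and reward $\mathcal{R}(\langle s,s'\rangle,a)=(1-\gamma)|R(s,a)-R(s',a)|$.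 For an RMDP with state space $Q$, actions $A$, rewards $\mathcal R$ and uncertainty set $\mathcal{U}$ inducing transition functions $P_{\vec u}$, the robust value of a policy $\pi$ is $\underline{V}^\pi(q)=\inf_{\vec u\in\mathcal{U}}\mathbb{E}_{\pi,P_{\vec u}}[\sum_{t\ge0}\gamma^t\mathcal{R}(q_t,a_t)\mid q_0=q]$ and the optimal robust value is $\underline{V}^*(q)=\sup_\pi\underline{V}^\pi(q)$ over all (history-dependent, randomized) policies. *)

(* Defs.v *)
From HB Require Import structures.
From mathcomp Require Import all_boot all_order all_algebra.
From mathcomp Require Import all_classical all_reals.
From mathcomp Require Import topology normedtype sequences.
Set Implicit Arguments. Unset Strict Implicit. Unset Printing Implicit Defensive.
Import Order.TTheory GRing.Theory Num.Theory numFieldNormedType.Exports.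
Local Open Scope ring_scope.
Local Open Scope classical_set_scope.

Section Defs.
Variable R : realType.

Definition is_dist (T : finType) (mu : {ffun T -> R}) : Prop :=
  (forall t, 0 <= mu t) /\ \sum_t mu t = 1.

Definition is_coupling (T : finType) (mu nu : {ffun T -> R})
  (lam : {ffun T * T -> R}) : Prop :=
  [/\ forall t t', 0 <= lam (t, t'),
      forall t, \sum_t' lam (t, t') = mu t &
      forall t', \sum_t lam (t, t') = nu t'].

Definition is_pseudometric (X : Type) (d : X -> X -> R) : Prop :=
  [/\ forall x x', 0 <= d x x',
      forall x, d x x = 0,
      forall x x', d x x' = d x' x &
      forall x x' x'', d x x'' <= d x x' + d x' x''].

Section RMDP.
Variables (Q A : finType).

(* history-dependent randomized policy: past (state,action) pairs and
   current state give a distribution over actions *)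
Definition policy := seq (Q * A) -> Q -> {ffun A -> R}.
Definition is_policy (pi : policy) : Prop := forall h q, is_dist (pi h q).

Definition trans := Q -> A -> {ffun Q -> R}.

Variables (rew : Q -> A -> R) (gamma : R).

(* expected discounted reward over the first T steps, starting from
   history h in current state q:  E[ sum_{t<T} gamma^t rew(q_t,a_t) ] *)
Fixpoint ret_T (pi : policy) (P : trans) (T : nat) (h : seq (Q * A)) (q : Q)
  : R :=
  match T with
  | 0 => 0
  | T'.+1 => \sum_a pi h q a *
       (rew q a + gamma * \sum_q' P q a q' * ret_T pi P T' (rcons h (q, a)) q')
  end.

Definition value (pi : policy) (P : trans) (q : Q) : R :=
  limn (fun T => ret_T pi P T [::] q).

Definition robust_value (U : set trans) (pi : policy) (q : Q) : R :=
  inf [set value pi P q | P in U].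

Definition opt_robust_value (U : set trans) (q : Q) : R :=
  sup [set robust_value U pi q | pi in is_policy].

End RMDP.

Section Bisim.
Variables (S A : finType) (P : S -> A -> {ffun S -> R}) (Rw : S -> A -> R)
  (gamma : R).

Definition bisim_unc : set (trans (S * S)%type A) :=
  [set u | forall (q : S * S) (a : A), is_coupling (P q.1 a) (P q.2 a) (u q a)].

Definition bisim_rew (q : S * S) (a : A) : R :=
  (1 - gamma) * `|Rw q.1 a - Rw q.2 a|.

Definition bisim_opt_value (q : S * S) : R :=
  opt_robust_value bisim_rew gamma bisim_unc q.

End Bisim.
End Defs.

(* Main.v *)
Require Import Defs.
From HB Require Import structures.
From mathcomp Require Import all_boot all_order all_algebra.
From mathcomp Require Import all_classical all_reals.
From mathcomp Require Import topology normedtype sequences.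
Import Order.TTheory GRing.Theory Num.Theory.
Local Open Scope ring_scope.
Local Open Scope classical_set_scope.

Section Aux.
Variable R : realType.

Lemma dist_avg (T : finType) (mu : {ffun T -> R}) (f : T -> R) b :
  is_dist mu -> (forall t, f t <= b) -> \sum_t mu t * f t <= b.
Proof.
case=> m0 m1 fb; have -> : b = \sum_t mu t * b by rewrite -mulr_suml m1 mul1r.
by apply: ler_sum => t _; apply: ler_wpM2l.
Qed.

Lemma dist_avg_ge (T : finType) (mu : {ffun T -> R}) (f : T -> R) b :
  is_dist mu -> (forall t, b <= f t) -> b <= \sum_t mu t * f t.
Proof.
case=> m0 m1 fb; have -> : b = \sum_t mu t * b by rewrite -mulr_suml m1 mul1r.
by apply: ler_sum => t _; apply: ler_wpM2l.
Qed.

Lemma dist_lin (T : finType) (mu : {ffun T -> R}) (f : T -> R) c :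
  is_dist mu -> \sum_t mu t * (f t + c) = \sum_t mu t * f t + c.
Proof.
case=> m0 m1; under eq_bigr do rewrite mulrDr.
by rewrite big_split /= -mulr_suml m1 mul1r.
Qed.

Lemma single_le_sum (T : finType) (F : T -> R) i :
  (forall j, 0 <= F j) -> F i <= \sum_j F j.
Proof.
move=> F0; rewrite (bigD1 i) //= lerDl; exact: sumr_ge0.
Qed.

Lemma sum_pair (T : finType) (F : T * T -> R) :
  \sum_q F q = \sum_t \sum_t' F (t, t').
Proof. by rewrite pair_bigA; apply: eq_bigr => -[]. Qed.

Lemma cpl_dist (T : finType) (mu nu : {ffun T -> R}) lam :
  is_dist mu -> is_coupling mu nu lam -> is_dist lam.
Proof.
case=> _ m1 [l0 l1 l2]; split; first by case.
by rewrite sum_pair -m1; apply: eq_bigr => t _; rewrite l1.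
Qed.

Lemma cpl_zero1 (T : finType) (mu nu : {ffun T -> R}) lam t t' :
  is_coupling mu nu lam -> nu t' = 0 -> lam (t, t') = 0.
Proof.
case=> l0 _ l2 n0; apply/le_anti; rewrite l0 andbT -n0 -l2.
exact: (@single_le_sum T (fun t => lam (t, t')) t (fun j => l0 j t')).
Qed.

Lemma cpl_zero2 (T : finType) (mu nu : {ffun T -> R}) lam t t' :
  is_coupling mu nu lam -> mu t = 0 -> lam (t, t') = 0.
Proof.
case=> l0 l1 _ n0; apply/le_anti; rewrite l0 andbT -n0 -l1.
exact: (@single_le_sum T (fun t' => lam (t, t')) t' (fun j => l0 t j)).
Qed.

Lemma prod_cpl (T : finType) (mu nu : {ffun T -> R}) :
  is_dist mu -> is_dist nu ->
  is_coupling mu nu [ffun tt : T * T => mu tt.1 * nu tt.2].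
Proof.
case=> m0 m1 [n0 n1]; split.
- by move=> t t'; rewrite ffunE mulr_ge0.
- by move=> t; under eq_bigr do rewrite ffunE /=; rewrite -mulr_sumr n1 mulr1.
- by move=> t; under eq_bigr do rewrite ffunE /=; rewrite -mulr_suml m1 mul1r.
Qed.

Lemma glue_cpl (T : finType) (V : T -> T -> R) (mx my mz : {ffun T -> R}) l1 l2 :
  is_pseudometric V ->
  is_coupling mx my l1 -> is_coupling my mz l2 ->
  exists l, is_coupling mx mz l /\
   \sum_q l q * V q.1 q.2 <=
   \sum_q l1 q * V q.1 q.2 + \sum_q l2 q * V q.1 q.2.
Proof.
move=> [V0 Vd Vs Vt] c1 c2.
have [a0 a1 a2] := c1; have [b0 b1 b2] := c2.
have k1 t t' : l1 (t, t') * (my t' / my t') = l1 (t, t').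
  have [e|ne] := eqVneq (my t') 0.
    by rewrite (@cpl_zero1 _ _ _ _ t t' c1 e) !mul0r.
  by rewrite mulfV // mulr1.
have k2 t' t'' : my t' * (l2 (t', t'') / my t') = l2 (t', t'').
  have [e|ne] := eqVneq (my t') 0.
    by rewrite (@cpl_zero2 _ _ _ _ t' t'' c2 e) mul0r mulr0.
  by rewrite mulrCA mulfV // mulr1.
pose l := [ffun tt : T * T => \sum_t' l1 (tt.1, t') * (l2 (t', tt.2) / my t')].
exists l; split; first split.
- move=> t t'; rewrite ffunE; apply: sumr_ge0 => s _.
  by apply: mulr_ge0 => //; apply: divr_ge0 => //; rewrite -a2 sumr_ge0.
- move=> t; under eq_bigr do rewrite ffunE /=.
  rewrite exchange_big /= -a1; apply: eq_bigr => t' _.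
  by rewrite -mulr_sumr -mulr_suml b1 k1.
- move=> t''; under eq_bigr do rewrite ffunE /=.
  rewrite exchange_big /= -b2; apply: eq_bigr => t' _.
  by rewrite -mulr_suml a2 k2.
rewrite sum_pair.
under eq_bigr do under eq_bigr do rewrite ffunE /= mulr_suml.
apply: le_trans (_ : \sum_t \sum_t'' \sum_t' (l1 (t, t') * (l2 (t', t'') / my t') * V t t'
   + l1 (t, t') * (l2 (t', t'') / my t') * V t' t'') <= _).
  apply: ler_sum => t _; apply: ler_sum => t'' _; apply: ler_sum => t' _.
  rewrite -mulrDr; apply: ler_wpM2l; last exact: Vt.
  by apply: mulr_ge0 => //; apply: divr_ge0 => //; rewrite -a2 sumr_ge0.
rewrite (@sum_pair _ (fun q => l1 q * V q.1 q.2)) (@sum_pair _ (fun q => l2 q * V q.1 q.2)) /=.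
under eq_bigr do under eq_bigr do rewrite big_split /=.
under eq_bigr do rewrite big_split /=.
rewrite big_split /=; apply: lerD; rewrite le_eqVlt; apply/orP; left; apply/eqP.
- apply: eq_bigr => t _; rewrite exchange_big /=; apply: eq_bigr => t' _.
  by rewrite -mulr_suml -mulr_sumr -mulr_suml b1 k1.
- rewrite exchange_big /=; under eq_bigr do rewrite exchange_big /=.
  rewrite exchange_big /=; apply: eq_bigr => t' _; apply: eq_bigr => t'' _.
  by rewrite -mulr_suml -mulr_suml a2 k2.
Qed.

End Aux.
From mathcomp Require Import ring lra.
Set Implicit Arguments. Unset Strict Implicit.
Import numFieldNormedType.Exports.
Section Main.
Variable R : realType.
Variables (S A : finType) (P : S -> A -> {ffun S -> R}) (Rw : S -> A -> R) (g : R).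
Hypothesis hg : 0 < g < 1.
Hypothesis hP : forall s a, is_dist (P s a).
Variable a0 : A.
Local Notation Q := (S * S)%type.
Local Notation rew := (bisim_rew Rw g).

Lemma g0 : 0 <= g. Proof. by case/andP: hg => /ltW. Qed.
Lemma gp : 0 < g. Proof. by case/andP: hg. Qed.
Lemma g1 : 0 < 1 - g. Proof. by case/andP: hg => _; rewrite subr_gt0. Qed.

Lemma rew_ge0 q a : 0 <= rew q a.
Proof. by rewrite /bisim_rew mulr_ge0 // ltW // g1. Qed.

Definition C := \sum_(p : Q * A) rew p.1 p.2.
Lemma C_ge0 : 0 <= C. Proof. by apply: sumr_ge0 => p _; apply: rew_ge0. Qed.
Lemma rew_leC q a : rew q a <= C.
Proof. exact: (@single_le_sum _ _ (fun p : Q * A => rew p.1 p.2) (q, a) (fun p => rew_ge0 _ _)). Qed.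

Definition K := C / (1 - g).
Lemma K_ge0 : 0 <= K. Proof. by rewrite divr_ge0 // ?C_ge0 // ltW // g1. Qed.
Lemma K_eq : C + g * K = K.
Proof.
have h := g1; rewrite /K; field; by rewrite lt0r_neq0.
Qed.

Definition cpl (q : Q) a := is_coupling (P q.1 a) (P q.2 a).

Definition mm (V : Q -> R) (q : Q) a :=
  inf [set \sum_q' lam q' * V q' | lam in cpl q a].

Lemma cpl_ex q a : exists lam, cpl q a lam.
Proof. by eexists; apply: prod_cpl. Qed.

Lemma cplD q a lam : cpl q a lam -> is_dist lam.
Proof. exact: cpl_dist. Qed.

Lemma mm_lb V q a lam : (forall q, 0 <= V q) -> cpl q a lam ->
  mm V q a <= \sum_q' lam q' * V q'.
Proof.
move=> V0 cl; apply: ge_inf; last by exists lam.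
exists 0 => _ [l hl <-]; apply: sumr_ge0 => q' _; apply: mulr_ge0 => //.
by case: (cplD hl).
Qed.

Lemma mm_glb V q a x : (forall lam, cpl q a lam -> x <= \sum_q' lam q' * V q') ->
  x <= mm V q a.
Proof.
move=> H; apply: lb_le_inf.
  by have [l hl] := cpl_ex q a; exists (\sum_q' l q' * V q'), l.
by move=> _ [l hl <-]; apply: H.
Qed.

Lemma mm_approx V q a e : (forall q, 0 <= V q) -> 0 < e ->
  exists lam, cpl q a lam /\ \sum_q' lam q' * V q' < mm V q a + e.
Proof.
move=> V0 e0; have [] := @inf_adherent R [set \sum_q' lam q' * V q' | lam in cpl q a] e e0.
  split; first by have [l hl] := cpl_ex q a; exists (\sum_q' l q' * V q'), l.
  exists 0 => _ [l hl <-]; apply: sumr_ge0 => q' _; apply: mulr_ge0 => //.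
  by case: (cplD hl).
by move=> _ [l hl <-] H; exists l.
Qed.

Lemma mm_ge0 V q a : (forall q, 0 <= V q) -> 0 <= mm V q a.
Proof.
move=> V0; apply: mm_glb => l hl; apply: sumr_ge0 => q' _; apply: mulr_ge0 => //.
by case: (cplD hl).
Qed.

Lemma mm_le V W c q a : (forall q, 0 <= V q) -> (forall q, 0 <= W q) ->
  (forall q, V q <= W q + c) -> mm V q a <= mm W q a + c.
Proof.
move=> V0 W0 H; rewrite -lerBlDr; apply: mm_glb => l hl; rewrite lerBlDr.
apply: le_trans (mm_lb V0 hl) _; rewrite -dist_lin; last exact: cplD hl.
by apply: ler_sum => q' _; apply: ler_wpM2l => //; case: (cplD hl).
Qed.

Lemma mm0 q a : mm (fun _ => 0) q a = 0.
Proof.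
apply/le_anti; rewrite mm_ge0 // andbT.
have [l hl] := cpl_ex q a; apply: le_trans (mm_lb _ hl) _ => //.
by rewrite big1 // => q' _; rewrite mulr0.
Qed.

Definition fB V q a := rew q a + g * mm V q a.
Definition astar V q := [arg max_(a > a0) fB V q a]%O.
Definition BV V q := fB V q (astar V q).

Lemma BV_ge V q a : fB V q a <= BV V q.
Proof. by rewrite /BV /astar; case: arg_maxP => //= i _ H; apply: H. Qed.

Lemma fB_ge0 V q a : (forall q, 0 <= V q) -> 0 <= fB V q a.
Proof. by move=> V0; rewrite addr_ge0 ?rew_ge0 // mulr_ge0 ?g0 ?mm_ge0. Qed.

Lemma BV_ge0 V q : (forall q, 0 <= V q) -> 0 <= BV V q.
Proof. by move=> V0; apply: fB_ge0. Qed.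

Lemma BV_le V W c q : (forall q, 0 <= V q) -> (forall q, 0 <= W q) ->
  (forall q, V q <= W q + c) -> BV V q <= BV W q + g * c.
Proof.
move=> V0 W0 H; rewrite {1}/BV /fB.
apply: le_trans (_ : fB W q (astar V q) + g * c <= _); last by rewrite lerD2r BV_ge.
by rewrite /fB -addrA lerD2l -mulrDr ler_wpM2l ?g0 // mm_le.
Qed.

Lemma BV0 q : BV (fun _ => 0) q <= C.
Proof. by rewrite /BV /fB mm0 mulr0 addr0 rew_leC. Qed.

Fixpoint Vn n : Q -> R := if n is m.+1 then BV (Vn m) else fun _ => 0.

Lemma Vn_ge0 n q : 0 <= Vn n q.
Proof. by elim: n q => [|n IH] q //=; apply: BV_ge0. Qed.

Lemma Vn_leK n q : Vn n q <= K.
Proof.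
elim: n q => [|n IH] q /=; first exact: K_ge0.
apply: le_trans (BV_le (c := K) q (Vn_ge0 n) (fun _ => lexx 0) _) _.
  by move=> q'; rewrite add0r IH.
by rewrite -[X in _ <= X]K_eq lerD2r BV0.
Qed.

Lemma Vn_mono n q : Vn n q <= Vn n.+1 q.
Proof.
elim: n q => [|n IH] q /=; first exact: BV_ge0.
have := BV_le (c := 0) q (Vn_ge0 n) (Vn_ge0 n.+1) (fun q => _); rewrite mulr0 addr0.
by apply => q'; rewrite addr0 IH.
Qed.

Lemma Vn_step n q : Vn n.+1 q <= Vn n q + g ^+ n * C.
Proof.
elim: n q => [|n IH] q; first by rewrite /= add0r expr0 mul1r BV0.
have := BV_le (c := g ^+ n * C) q (Vn_ge0 n.+1) (Vn_ge0 n) IH.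
by rewrite mulrA -exprS.
Qed.


Definition pm (V : Q -> R) := is_pseudometric (fun s s' => V (s, s')).

Lemma pmE V : pm V -> [/\ forall q, 0 <= V q, forall x, V (x, x) = 0,
  forall x y, V (x, y) = V (y, x) &
  forall x y z, V (x, z) <= V (x, y) + V (y, z)].
Proof. by case=> h1 h2 h3 h4; split=> // -[]. Qed.

Lemma mm_diag V s a : pm V -> mm V (s, s) a = 0.
Proof.
move=> /pmE [V0 Vd _ _]; apply/le_anti; rewrite mm_ge0 // andbT.
pose l := [ffun tt : Q => if tt.1 == tt.2 then P s a tt.1 else 0].
have hl : cpl (s, s) a l.
  split.
  - by move=> t t'; rewrite ffunE /=; case: eqP => _ //; case: (hP s a).
  - move=> t; rewrite /= (bigD1 t) //= ffunE eqxx big1 ?addr0 // => t' /negbTE.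
    by rewrite ffunE /= eq_sym => ->.
  - move=> t'; rewrite /= (bigD1 t') //= ffunE eqxx big1 ?addr0 // => t /negbTE.
    by rewrite ffunE /= => ->.
apply: le_trans (mm_lb V0 hl) _.
by rewrite big1 // => -[t t'] _; rewrite ffunE /=; case: eqP => [<-|_]; rewrite ?Vd ?mulr0 ?mul0r.
Qed.

Lemma mm_sym V s s' a : pm V -> mm V (s, s') a <= mm V (s', s) a.
Proof.
move=> /pmE [V0 _ Vs _]; apply: mm_glb => l hl.
pose lt := [ffun tt : Q => l (tt.2, tt.1)].
have ht : cpl (s, s') a lt.
  case: hl => l0 l1 l2; split => /=.
  - by move=> t t'; rewrite ffunE.
  - by move=> t; under eq_bigr do rewrite ffunE /=; rewrite l2.
  - by move=> t'; under eq_bigr do rewrite ffunE /=; rewrite l1.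
apply: le_trans (mm_lb V0 ht) _.
rewrite le_eqVlt; apply/orP; left; apply/eqP.
rewrite [LHS](reindex_inj (h := fun q : Q => (q.2, q.1))) /=; last first.
  by move=> [x y] [z w] [-> ->].
by apply: eq_bigr => -[t t'] _; rewrite ffunE /= Vs.
Qed.

Lemma mm_tri V x y z a : pm V ->
  mm V (x, z) a <= mm V (x, y) a + mm V (y, z) a.
Proof.
move=> pV; have [V0 Vd Vs Vt] := pmE pV.
apply/ler_addgt0Pr => e e0.
have e2 : 0 < e / 2 by rewrite divr_gt0.
have [l1 [h1 s1]] := mm_approx (x, y) a V0 e2.
have [l2 [h2 s2]] := mm_approx (y, z) a V0 e2.
have [l [hl sl]] := @glue_cpl R S (fun s s' => V (s, s')) _ _ _ _ _ pV h1 h2.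
have E : forall l0 : {ffun Q -> R}, \sum_q l0 q * V (q.1, q.2) = \sum_q l0 q * V q.
  by move=> l0; apply: eq_bigr => -[].
apply: le_trans (@mm_lb V (x, z) a l V0 hl) _; rewrite -E; apply: le_trans sl _; rewrite !E.
apply: le_trans (lerD (ltW s1) (ltW s2)) _.
by rewrite addrACA -splitr.
Qed.

Lemma BV_pm V : pm V -> pm (BV V).
Proof.
move=> pV; have [V0 Vd Vs Vt] := pmE pV; split.
- by move=> x x'; apply: BV_ge0.
- move=> x; rewrite /BV /fB mm_diag // /bisim_rew /=.
  by rewrite subrr normr0 !mulr0 add0r.
- have H x y : BV V (x, y) <= BV V (y, x).
    rewrite {1}/BV; apply: le_trans (BV_ge V (y, x) (astar V (x, y))).
    rewrite /fB; apply: lerD; last by rewrite ler_wpM2l ?g0 // mm_sym.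
    by rewrite /bisim_rew /= distrC.
  by move=> x x'; apply/le_anti; rewrite !H.
- move=> x y z; rewrite {1}/BV; set a := astar V (x, z).
  apply: le_trans (lerD (BV_ge V (x, y) a) (BV_ge V (y, z) a)).
  rewrite /fB addrACA; apply: lerD.
    rewrite /bisim_rew /= -mulrDr; apply: ler_wpM2l; [exact: ltW g1 | exact: ler_distD].
  rewrite -mulrDr; apply: ler_wpM2l; [exact: g0 | exact: mm_tri].
Qed.

Lemma Vn_pm n : pm (Vn n).
Proof.
elim: n => [|n IH] /=; last exact: BV_pm.
by split => *; rewrite ?addr0.
Qed.

Local Notation U := (bisim_unc P).
Local Notation ret := (ret_T rew g).

Lemma retS pi u T h q : ret pi u T.+1 h q =
  \sum_a pi h q a * (rew q a + g * \sum_q' u q a q' * ret pi u T (rcons h (q, a)) q').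
Proof. by []. Qed.

Lemma uD u q a : U u -> is_dist (u q a).
Proof. by move=> hu; apply: cplD (hu q a). Qed.

Section Pol.
Variables (pi : policy R Q A) (u : trans R Q A).
Hypotheses (hp : is_policy pi) (hu : U u).

Lemma ret_ge0 T h q : 0 <= ret pi u T h q.
Proof.
elim: T h q => [|T IH] h q //; rewrite retS.
apply: sumr_ge0 => a _; apply: mulr_ge0; first by case: (hp h q).
rewrite addr_ge0 ?rew_ge0 // mulr_ge0 ?g0 //.
apply: sumr_ge0 => q' _; apply: mulr_ge0 => //; by case: (uD q a hu).
Qed.

Lemma ret_mono T h q : ret pi u T h q <= ret pi u T.+1 h q.
Proof.
elim: T h q => [|T IH] h q; first exact: ret_ge0.
rewrite (retS _ _ T.+1) retS.
apply: ler_sum => a _; apply: ler_wpM2l; first by case: (hp h q).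
rewrite lerD2l; apply: ler_wpM2l; first exact: g0.
apply: ler_sum => q' _; apply: ler_wpM2l; last exact: IH.
by case: (uD q a hu).
Qed.

Lemma ret_leK T h q : ret pi u T h q <= K.
Proof.
elim: T h q => [|T IH] h q; first exact: K_ge0.
rewrite retS; apply: dist_avg (hp h q) _ => a.
rewrite -K_eq; apply: lerD (rew_leC _ _) _; apply: ler_wpM2l; first exact: g0.
by apply: dist_avg (uD q a hu) _ => q'.
Qed.

Lemma value_sup q : value rew g pi u q = sup (range (fun T => ret pi u T [::] q)).
Proof.
rewrite /value.
have H1 : {homo (fun T => ret pi u T [::] q) : n m / (n <= m)%N >-> n <= m}.
  by apply/nondecreasing_seqP => n; apply: ret_mono.
have H2 : has_ubound (range (fun T => ret pi u T [::] q)).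
  by exists K => _ [T _ <-]; apply: ret_leK.
by apply/cvg_lim => //; exact: nondecreasing_cvgn.
Qed.

Lemma value_ge q T : ret pi u T [::] q <= value rew g pi u q.
Proof.
rewrite value_sup; apply: ub_le_sup; last by exists T.
by exists K => _ [T' _ <-]; apply: ret_leK.
Qed.

Lemma value_le q b : (forall T, ret pi u T [::] q <= b) -> value rew g pi u q <= b.
Proof.
move=> H; rewrite value_sup; apply: ge_sup.
  by exists (ret pi u 0 [::] q), 0%N.
by move=> _ [T _ <-].
Qed.

Lemma value_ge0 q : 0 <= value rew g pi u q.
Proof. exact: (value_ge q 0). Qed.

End Pol.

Definition dirac (f : seq (Q * A) -> Q -> A) : policy R Q A :=
  fun h q => [ffun a => (a == f h q)%:R].

Lemma dirac_pol f : is_policy (dirac f).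
Proof.
move=> h q; split => [a|]; first by rewrite ffunE ler0n.
rewrite (bigD1 (f h q)) //= ffunE eqxx big1 ?addr0 // => a /negbTE.
by rewrite ffunE => ->.
Qed.

Lemma dirac_sum f h q (F : A -> R) : \sum_a dirac f h q a * F a = F (f h q).
Proof.
rewrite (bigD1 (f h q)) //= ffunE eqxx mul1r big1 ?addr0 // => a /negbTE.
by rewrite ffunE => ->; rewrite mul0r.
Qed.

Definition u0 : trans R Q A := fun q a => [ffun tt : Q => P q.1 a tt.1 * P q.2 a tt.2].
Lemma u0U : U u0.
Proof. by move=> q a; apply: prod_cpl. Qed.

Lemma robust_le pi u q : is_policy pi -> U u ->
  robust_value rew g U pi q <= value rew g pi u q.
Proof.
move=> hp hu; apply: ge_inf; last by exists u.
by exists 0 => _ [v hv <-]; apply: value_ge0.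
Qed.

Lemma robust_ge pi q b : is_policy pi -> (forall u, U u -> b <= value rew g pi u q) ->
  b <= robust_value rew g U pi q.
Proof.
move=> hp H; apply: lb_le_inf; first by exists (value rew g pi u0 q), u0 => //; apply: u0U.
by move=> _ [v hv <-]; apply: H.
Qed.

Definition K2 := (C + g * (C + 1)) / (1 - g).
Lemma K2_ge0 : 0 <= K2.
Proof.
apply: divr_ge0; last exact: ltW g1.
by rewrite addr_ge0 ?C_ge0 // mulr_ge0 ?g0 // addr_ge0 ?C_ge0.
Qed.

Lemma robust_ub n pi q : is_policy pi ->
  robust_value rew g U pi q <= Vn n q + g ^+ n * K2.
Proof.
move=> hp; set eps := g ^+ n * (C + 1).
have e0 : 0 < eps by rewrite mulr_gt0 ?exprn_gt0 ?gp // ltr_wpDl ?C_ge0.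
have : forall qa : Q * A, exists lam, cpl qa.1 qa.2 lam /\
    \sum_q' lam q' * Vn n q' < mm (Vn n) qa.1 qa.2 + eps.
  by move=> qa; apply: (mm_approx qa.1 qa.2 (Vn_ge0 n) e0).
case/choice => uf Hu.
pose u : trans R Q A := fun q a => uf (q, a).
have hu : U u by move=> q' a; case: (Hu (q', a)).
apply: le_trans (robust_le q hp hu) _; apply: (value_le hp hu) => T0.
suff H : forall T h q, ret pi u T h q <= Vn n q + g ^+ n * K2 by apply: H.
elim=> [|T IH] h q'.
  by rewrite /= addr_ge0 ?Vn_ge0 // mulr_ge0 ?exprn_ge0 ?g0 ?K2_ge0.
rewrite retS; apply: dist_avg (hp h q') _ => a.
have [hl sl] := Hu (q', a).
apply: le_trans (_ : fB (Vn n) q' a + g * (eps + g ^+ n * K2) <= _).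
  rewrite /fB -addrA lerD2l -mulrDr ler_wpM2l ?g0 //.
  apply: le_trans (_ : \sum_q'' u q' a q'' * (Vn n q'' + g ^+ n * K2) <= _).
    apply: ler_sum => q'' _; apply: ler_wpM2l; last exact: IH.
    by case: (cplD hl).
  rewrite dist_lin; last exact: cplD hl.
  by rewrite addrA lerD2r; apply: ltW.
apply: le_trans (_ : BV (Vn n) q' + g * (eps + g ^+ n * K2) <= _).
  by rewrite lerD2r BV_ge.
apply: le_trans (_ : Vn n q' + g ^+ n * C + g * (eps + g ^+ n * K2) <= _).
  by rewrite lerD2r (Vn_step n q').
rewrite -addrA lerD2l le_eqVlt; apply/orP; left; apply/eqP.
have h1 := g1; rewrite /eps /K2; field; by rewrite lt0r_neq0.
Qed.

Lemma opt_ub n q : bisim_opt_value P Rw g q <= Vn n q + g ^+ n * K2.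
Proof.
rewrite /bisim_opt_value /opt_robust_value; apply: ge_sup.
  exists (robust_value rew g U (dirac (fun _ _ => a0)) q), (dirac (fun _ _ => a0)) => //.
  exact: dirac_pol.
by move=> _ [pi hp <-]; apply: robust_ub.
Qed.

Lemma opt_lb n q : Vn n q - g ^+ n * K <= bisim_opt_value P Rw g q.
Proof.
pose pi := dirac (fun _ q => astar (Vn n) q).
have hp : is_policy pi := dirac_pol _.
apply: le_trans (_ : robust_value rew g U pi q <= _); last first.
  apply: ub_le_sup; last by exists pi.
  exists K2 => _ [p hp' <-]; apply: le_trans (robust_ub 0 q hp') _.
  by rewrite /= add0r expr0 mul1r.
apply: robust_ge => // u hu.
apply: le_trans (value_ge hp hu q n).
suff H : forall k h q, Vn n q - g ^+ k * K <= ret pi u k h q by apply: H.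
elim=> [|k IH] h q'; first by rewrite /= expr0 mul1r subr_le0 Vn_leK.
rewrite retS dirac_sum.
set a := astar (Vn n) q'.
apply: le_trans (_ : fB (Vn n) q' a - g ^+ k.+1 * K <= _).
  by rewrite lerD2r; apply: (Vn_mono n q').
rewrite /fB exprS -mulrA -addrA -mulrBr lerD2l ler_wpM2l ?g0 //.
apply: le_trans (_ : \sum_q'' u q' a q'' * (Vn n q'' - g ^+ k * K) <= _).
  rewrite dist_lin; last exact: uD.
  by rewrite lerD2r; apply: mm_lb (Vn_ge0 n) (hu q' a).
apply: ler_sum => q'' _; apply: ler_wpM2l; last exact: IH.
by case: (uD q' a hu).
Qed.

Lemma geo_le x y Kc : 0 <= Kc -> (forall n, x <= y + g ^+ n * Kc) -> x <= y.
Proof.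
move=> K0 H; apply/ler_addgt0Pr => e e0.
have hc : (fun n => g ^+ n) @ \oo --> (0 : R).
  by apply: cvg_expr; rewrite ger0_norm ?g0 //; case/andP: hg.
have Kp : 0 < Kc + 1 by rewrite ltr_wpDl.
have := @cvgr0_norm_lt _ _ _ _ _ _ hc _ (divr_gt0 e0 Kp); case=> N _ HN.
have := HN N (leqnn N); rewrite /= ger0_norm ?exprn_ge0 ?g0 // ltr_pdivlMr //.
move=> lt; apply: le_trans (H N) _; rewrite lerD2l.
apply: le_trans (ltW lt); apply: ler_wpM2l; first by rewrite exprn_ge0 ?g0.
by rewrite lerDl.
Qed.

Lemma opt_pm : pm (bisim_opt_value P Rw g).
Proof.
set d := bisim_opt_value P Rw g.
have ub n q : d q <= Vn n q + g ^+ n * K2 by apply: opt_ub.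
have lbr n q : Vn n q <= d q + g ^+ n * K by rewrite -lerBlDr; apply: opt_lb.
have d0 q : 0 <= d q.
  apply: (geo_le K_ge0) => n; apply: le_trans (lbr n q); exact: Vn_ge0.
have K3 : 0 <= K2 + K + K by rewrite !addr_ge0 ?K2_ge0 ?K_ge0.
split.
- by move=> x x'; apply: d0.
- move=> x; apply/le_anti; rewrite d0 andbT.
  apply: (geo_le K2_ge0) => n; have [_ Vd _ _] := pmE (Vn_pm n).
  by apply: le_trans (ub n (x, x)) _; rewrite Vd.
- have H x y : d (x, y) <= d (y, x).
    apply: (geo_le K3) => n; have [_ _ Vs _] := pmE (Vn_pm n).
    have h1 := ub n (x, y); have h2 := lbr n (y, x); rewrite Vs in h1.
    have t0 : 0 <= g ^+ n * K by rewrite mulr_ge0 ?exprn_ge0 ?g0 ?K_ge0.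
    rewrite !mulrDr; lra.
  by move=> x x'; apply/le_anti; rewrite !H.
- move=> x y z; apply: (geo_le K3) => n; have [_ _ _ Vt] := pmE (Vn_pm n).
  have h1 := ub n (x, z); have h2 := lbr n (x, y); have h3 := lbr n (y, z).
  have h4 := Vt x y z.
  rewrite !mulrDr; lra.
Qed.

End Main.
Unset Implicit Arguments.

Theorem lemma18 (R : realType) (S A : finType) (P : S -> A -> {ffun S -> R})
  (Rw : S -> A -> R) (s_iota : S) (gamma : R)
  (hgamma : 0 < gamma < 1) (hP : forall s a, is_dist (P s a))
  (s1 s2 : S) :
  is_pseudometric (fun s s' : S => bisim_opt_value P Rw gamma (s, s')).
Proof.
case: (pickP (@predT A)) => [a0 _|noA].
  exact: (@opt_pm R S A P Rw gamma hgamma hP a0).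
have E : forall q, bisim_opt_value P Rw gamma q = 0.
  move=> q; rewrite /bisim_opt_value /opt_robust_value.
  rewrite (_ : [set _ | pi in _] = set0) ?sup0 //.
  apply/seteqP; split => // y [pi hp _].
  have [_ h1] := hp [::] q.
  have : \sum_a pi [::] q a = 0 by rewrite big1 // => a; have := noA a.
  by rewrite h1 => /eqP; rewrite oner_eq0.
by split => *; rewrite ?E ?addr0.
Qed.
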